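(* Let $\beta\in[0,1]$ and let $f\in C^{3+\beta}$ with $f'>0$ on $[A,B]$. Then there is a constant $C$ depending only on $f$ (and $[A,B]$) such that for all $x_1,x_2,x_3\in[A,B]$, $$ {\rm D}(x_1,x_2,x_3;f)=1+(x_1-x_3)\left(\frac{f''(x_1)}{2f'(x_1)}+\frac{1}{6}Sf(x_1)(x_2+x_3-2x_1)+R\right),\qquad |R|\le C\Delta^{1+\beta}, $$ where $\Delta=\max\{x_1,x_2,x_3\}-\min\{x_1,x_2,x_3\}$.
   Context: The ratio distortion of three points with respect to a strictly increasing function $f$ is ${\rm D}(x_1,x_2,x_3;f)=\frac{f(x_1)-f(x_2)}{x_1-x_2}:\frac{f(x_2)-f(x_3)}{x_2-x_3}$; for smooth $f$ with $f'\neq0$ it is defined for non-distinct points by replacing any ratio $(f(a)-f(a))/(a-a)$ with $f'(a)$ (equivalently, by continuity). The Schwarzian derivative is $Sf=\frac{f'''}{f'}-\frac{3}{2}\left(\frac{f''}{f'}\right)^2$. $C^{3+\beta}$ means three times differentiable with $\beta$-Hölder third derivative ($\beta=0$: continuous third derivative). *)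

(* Defs.v *)
From Stdlib Require Import Reals.
From Coquelicot Require Import Coquelicot.
Open Scope R_scope.

Definition inI (A B x : R) : Prop := A <= x <= B.

Definition deriv_on (A B : R) (f g : R -> R) : Prop :=
  forall x, inI A B x ->
    filterlim (fun y => (f y - f x) / (y - x))
      (within (fun y => inI A B y /\ y <> x) (locally x)) (locally (g x)).

Definition cont_on (A B : R) (g : R -> R) : Prop :=
  forall x, inI A B x ->
    filterlim g (within (inI A B) (locally x)) (locally (g x)).

Definition holder_on (A B beta : R) (g : R -> R) : Prop :=
  exists K, forall x y, inI A B x -> inI A B y -> x <> y ->
    Rabs (g x - g y) <= K * Rpower (Rabs (x - y)) beta.

(* f is C^{3+beta} on [A,B] with derivatives f1, f2, f3:
   third derivative continuous (beta = 0 case) and beta-Hoelder. *)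
Definition C3beta_on (A B beta : R) (f f1 f2 f3 : R -> R) : Prop :=
  deriv_on A B f f1 /\ deriv_on A B f1 f2 /\ deriv_on A B f2 f3 /\
  cont_on A B f3 /\ holder_on A B beta f3.

(* x^a for x >= 0, with 0^a = 0 for a > 0 and 0^0 = 1 *)
Definition powr (x a : R) : R :=
  if Req_EM_T x 0 then (if Req_EM_T a 0 then 1 else 0) else Rpower x a.

Definition dquot (f f1 : R -> R) (a b : R) : R :=
  if Req_EM_T a b then f1 a else (f a - f b) / (a - b).

Definition ratio_dist (f f1 : R -> R) (x1 x2 x3 : R) : R :=
  dquot f f1 x1 x2 / dquot f f1 x2 x3.

Definition schwarzian (f1 f2 f3 : R -> R) (x : R) : R :=
  f3 x / f1 x - 3 / 2 * (f2 x / f1 x) ^ 2.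

(* Main.v *)
Require Import Defs.
From Stdlib Require Import Reals Lra.
From Coquelicot Require Import Coquelicot.
Open Scope R_scope.

Lemma deriv_eps A B g g' x : deriv_on A B g g' -> inI A B x ->
  forall eps, 0 < eps -> exists d, 0 < d /\ forall y, inI A B y -> y <> x -> Rabs (y - x) < d ->
   Rabs ((g y - g x)/(y - x) - g' x) < eps.
Proof.
  intros Hd Hx eps He.
  specialize (Hd x Hx).
  destruct (proj1 (filterlim_locally _ _) Hd (mkposreal eps He)) as [d Hd'].
  exists d. split. apply cond_pos. intros y Hy Hyx Hyd.
  apply (Hd' y). exact Hyd. split; assumption.
Qed.

Lemma deriv_lip A B g g' x : deriv_on A B g g' -> inI A B x ->
  exists d, 0 < d /\ forall y, inI A B y -> Rabs (y - x) < d ->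
    Rabs (g y - g x) <= (Rabs (g' x) + 1) * Rabs (y - x).
Proof.
  intros Hd Hx. destruct (deriv_eps _ _ _ _ _ Hd Hx 1 Rlt_0_1) as [d [Hd0 H]].
  exists d; split; auto. intros y Hy Hyd.
  destruct (Req_dec y x) as [->|Hne].
  { rewrite !Rminus_eq_0, Rabs_R0. lra. }
  specialize (H y Hy Hne Hyd).
  assert (Hyx: y - x <> 0) by lra.
  replace (g y - g x) with (((g y - g x)/(y-x) - g' x + g' x) * (y - x)) by (field; auto).
  rewrite Rabs_mult. apply Rmult_le_compat_r. apply Rabs_pos.
  eapply Rle_trans. apply Rabs_triang. lra.
Qed.

Lemma deriv_interior A B g g' G lo hi x : deriv_on A B g g' ->
  (forall y, lo <= y <= hi -> G y = g y) -> A <= lo -> hi <= B -> lo < x < hi ->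
  derivable_pt_lim G x (g' x).
Proof.
  intros Hd HG HA HB Hx eps He.
  destruct (deriv_eps A B g g' x Hd ltac:(unfold inI; lra) eps He) as [d [Hd0 H]].
  assert (Hpos: 0 < Rmin d (Rmin (x - lo) (hi - x))) by (repeat apply Rmin_glb_lt; lra).
  exists (mkposreal _ Hpos). intros h Hh Hhd. simpl in Hhd.
  assert (h1: Rabs h < d) by (eapply Rlt_le_trans; [exact Hhd| apply Rmin_l]).
  assert (h2: Rabs h < Rmin (x-lo) (hi-x)) by (eapply Rlt_le_trans; [exact Hhd| apply Rmin_r]).
  assert (h3: Rabs h < x - lo) by (eapply Rlt_le_trans; [exact h2| apply Rmin_l]).
  assert (h4: Rabs h < hi - x) by (eapply Rlt_le_trans; [exact h2| apply Rmin_r]).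
  apply Rabs_def2 in h3. apply Rabs_def2 in h4.
  rewrite (HG (x+h)) by lra. rewrite (HG x) by lra.
  specialize (H (x+h) ltac:(unfold inI; lra) ltac:(lra)).
  replace (x + h - x) with h in H by ring. apply H. exact h1.
Qed.

Definition clamp a b y := Rmax a (Rmin b y).

Lemma clamp_id a b y : a <= y <= b -> clamp a b y = y.
Proof. unfold clamp, Rmax, Rmin; intros; repeat destruct Rle_dec; lra. Qed.

Lemma clamp_in a b y : a <= b -> a <= clamp a b y <= b.
Proof. unfold clamp, Rmax, Rmin; intros; repeat destruct Rle_dec; lra. Qed.

Lemma clamp_dist a b y x : a <= x <= b -> Rabs (clamp a b y - x) <= Rabs (y - x).
Proof. unfold clamp, Rmax, Rmin; intros; repeat destruct Rle_dec; unfold Rabs;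
  repeat destruct Rcase_abs; lra. Qed.

Lemma clamp_cont A B g g' a b x : deriv_on A B g g' -> A <= a -> b <= B -> a <= x <= b ->
  continuity_pt (fun y => g (clamp a b y)) x.
Proof.
  intros Hd Ha Hb Hx.
  destruct (deriv_lip A B g g' x Hd ltac:(unfold inI; lra)) as [d [Hd0 H]].
  unfold continuity_pt, continue_in, limit1_in, limit_in; simpl; unfold R_dist.
  intros eps He.
  set (k := Rabs (g' x) + 1).
  assert (Hk: 0 < k) by (unfold k; pose proof (Rabs_pos (g' x)); lra).
  exists (Rmin d (eps / k)). split. apply Rmin_glb_lt; [lra| apply Rdiv_lt_0_compat; lra].
  intros y [_ Hy].
  assert (Hy1: Rabs (y - x) < d) by (eapply Rlt_le_trans; [exact Hy| apply Rmin_l]).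
  assert (Hy2: Rabs (y - x) < eps / k) by (eapply Rlt_le_trans; [exact Hy| apply Rmin_r]).
  rewrite (clamp_id a b x) by lra.
  pose proof (clamp_dist a b y x Hx) as Hc.
  pose proof (clamp_in a b y ltac:(lra)) as Hi.
  eapply Rle_lt_trans. apply (H (clamp a b y)). unfold inI; lra. lra.
  apply Rle_lt_trans with (k * Rabs (y - x)). apply Rmult_le_compat_l; lra.
  replace eps with (k * (eps / k)) by (field; lra). apply Rmult_lt_compat_l; lra.
Qed.

Lemma mvt_on A B g g' q q' a b : deriv_on A B g g' -> (forall y, derivable_pt_lim q y (q' y)) ->
  A <= a -> a <= b -> b <= B ->
  exists c, a <= c <= b /\ (g b - q b) - (g a - q a) = (g' c - q' c) * (b - a).
Proof.
  intros Hd Hq Ha Hab Hb.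
  pose proof (MVT_gen (fun y => g (clamp a b y) - q y) a b (fun y => g' y - q' y)) as HM.
  cbv zeta in HM. rewrite Rmin_left, Rmax_right in HM by lra.
  destruct HM as [c [Hc Heq]].
  - intros x Hx. apply is_derive_Reals.
    apply (derivable_pt_lim_minus (fun y => g (clamp a b y)) q).
    eapply deriv_interior; eauto. intros; rewrite clamp_id; [reflexivity|lra]. apply Hq.
  - intros x Hx. apply (continuity_pt_minus (fun y => g (clamp a b y)) q).
    eapply clamp_cont; eauto. apply derivable_continuous_pt. exists (q' x). apply Hq.
  - exists c. split. exact Hc. rewrite <- Heq. rewrite !clamp_id by lra. ring.
Qed.

Lemma pow_le_abs x y n : Rabs x <= Rabs y -> Rabs x ^ n <= Rabs y ^ n.
Proof. intros; apply pow_incr; split; [apply Rabs_pos|auto]. Qed.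

Lemma step A B g g' q q' p y M n : deriv_on A B g g' -> (forall t, derivable_pt_lim q t (q' t)) ->
  inI A B p -> inI A B y -> g p - q p = 0 -> 0 <= M ->
  (forall t, Rmin p y <= t <= Rmax p y -> Rabs (g' t - q' t) <= M * Rabs (t - p) ^ n) ->
  Rabs (g y - q y) <= M * Rabs (y - p) ^ (S n).
Proof.
  intros Hd Hq Hp Hy H0 HM Hb. unfold inI in *.
  destruct (Rle_dec p y) as [Hpy|Hpy].
  - destruct (mvt_on A B g g' q q' p y Hd Hq ltac:(lra) Hpy ltac:(lra)) as [c [Hc Heq]].
    rewrite H0, Rminus_0_r in Heq. rewrite Heq, Rabs_mult.
    assert (Hc': Rmin p y <= c <= Rmax p y) by (rewrite Rmin_left, Rmax_right; lra).
    specialize (Hb c Hc').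
    simpl. rewrite (Rmult_comm (Rabs (y - p))), <- Rmult_assoc.
    apply Rmult_le_compat_r. apply Rabs_pos. eapply Rle_trans. exact Hb.
    apply Rmult_le_compat_l; auto. apply pow_le_abs.
    rewrite !Rabs_pos_eq; lra.
  - destruct (mvt_on A B g g' q q' y p Hd Hq ltac:(lra) ltac:(lra) ltac:(lra)) as [c [Hc Heq]].
    rewrite H0 in Heq.
    replace (g y - q y) with (- (g' c - q' c) * (p - y)) by lra.
    rewrite Rabs_mult, Rabs_Ropp.
    assert (Hc': Rmin p y <= c <= Rmax p y) by (rewrite Rmin_right, Rmax_left; lra).
    specialize (Hb c Hc').
    simpl. replace (Rabs (p - y)) with (Rabs (y - p)) by (rewrite <- Rabs_Ropp; f_equal; ring).
    rewrite (Rmult_comm (Rabs (y - p))), <- Rmult_assoc.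
    apply Rmult_le_compat_r. apply Rabs_pos. eapply Rle_trans. exact Hb.
    apply Rmult_le_compat_l; auto. apply pow_le_abs.
    rewrite Rabs_left1 by lra. rewrite Rabs_left1 by lra. lra.
Qed.

Lemma dpl_test (a b c p : R) : forall t, derivable_pt_lim (fun t => a + b * (t - p) + c * (t-p)^2/2) t (b + c * (t - p)).
Proof. intros t. apply is_derive_Reals. auto_derive; auto. simpl. field. Qed.

Ltac dpl := intros ?; apply is_derive_Reals; auto_derive; auto; simpl; field.

Section Tay.
Variables (A B lo hi Hw : R) (f f1 f2 f3 : R -> R).
Hypothesis d0 : deriv_on A B f f1.
Hypothesis d1 : deriv_on A B f1 f2.
Hypothesis d2 : deriv_on A B f2 f3.
Hypothesis Alo : A <= lo.
Hypothesis hiB : hi <= B.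
Hypothesis Hw0 : 0 <= Hw.
Hypothesis hol : forall t s, lo <= t <= hi -> lo <= s <= hi -> Rabs (f3 t - f3 s) <= Hw.

Lemma betw p y t : lo <= p <= hi -> lo <= y <= hi -> Rmin p y <= t <= Rmax p y -> lo <= t <= hi /\ Rabs (t - p) <= Rabs (y - p).
Proof. unfold Rmin, Rmax; intros; repeat destruct Rle_dec; unfold Rabs; repeat destruct Rcase_abs; lra. Qed.

Lemma tb p y : lo <= p <= hi -> lo <= y <= hi ->
  Rabs (f2 y - f2 p - f3 p * (y - p)) <= Hw * Rabs (y - p).
Proof.
  intros Hp Hy.
  pose proof (step A B f2 f3 (fun t => f2 p + f3 p * (t - p)) (fun _ => f3 p) p y Hw 0 d2
    ltac:(dpl) ltac:(unfold inI; lra) ltac:(unfold inI; lra) ltac:(cbv beta; ring) Hw0) as H.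
  replace (f2 y - f2 p - f3 p * (y - p)) with (f2 y - (f2 p + f3 p * (y - p))) by ring.
  replace (Hw * Rabs (y - p)) with (Hw * Rabs (y - p) ^ 1) by ring.
  apply H. intros t Ht. destruct (betw p y t Hp Hy Ht). simpl. rewrite Rmult_1_r. apply hol; auto.
Qed.

Lemma tc p y : lo <= p <= hi -> lo <= y <= hi ->
  Rabs (f1 y - (f1 p + f2 p * (y - p) + f3 p * (y - p) ^ 2 / 2)) <= Hw * Rabs (y - p) ^ 2.
Proof.
  intros Hp Hy.
  apply (step A B f1 f2 (fun t => f1 p + f2 p * (t - p) + f3 p * (t - p) ^ 2 / 2)
    (fun t => f2 p + f3 p * (t - p)) p y Hw 1 d1
    ltac:(dpl) ltac:(unfold inI; lra) ltac:(unfold inI; lra) ltac:(simpl; field) Hw0).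
  intros t Ht. destruct (betw p y t Hp Hy Ht). simpl. rewrite Rmult_1_r.
  replace (f2 t - (f2 p + f3 p * (t - p))) with (f2 t - f2 p - f3 p * (t - p)) by ring.
  apply tb; auto.
Qed.

Lemma td p y : lo <= p <= hi -> lo <= y <= hi ->
  Rabs (f y - (f p + f1 p * (y - p) + f2 p * (y - p) ^ 2 / 2 + f3 p * (y - p) ^ 3 / 6))
    <= Hw * Rabs (y - p) ^ 3.
Proof.
  intros Hp Hy.
  apply (step A B f f1 (fun t => f p + f1 p * (t - p) + f2 p * (t - p) ^ 2 / 2 + f3 p * (t - p) ^ 3 / 6)
    (fun t => f1 p + f2 p * (t - p) + f3 p * (t - p) ^ 2 / 2) p y Hw 2 d0
    ltac:(dpl) ltac:(unfold inI; lra) ltac:(unfold inI; lra) ltac:(simpl; field) Hw0).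
  intros t Ht. destruct (betw p y t Hp Hy Ht). apply tc; auto.
Qed.

End Tay.

Lemma dquot_sym f f1 a b : dquot f f1 a b = dquot f f1 b a.
Proof. unfold dquot. destruct (Req_EM_T a b); destruct (Req_EM_T b a); subst; try congruence.
  assert (a - b <> 0) by (intro; apply n; lra). assert (b - a <> 0) by (intro; apply n; lra).
  field; auto. Qed.

Lemma dquot_mul f f1 a b : dquot f f1 a b * (a - b) = f a - f b.
Proof. unfold dquot. destruct (Req_EM_T a b). subst; ring.
  assert (a - b <> 0) by (intro; apply n; lra). field; auto. Qed.

Lemma div_bound x y k : Rabs x <= k * Rabs y -> y <> 0 -> Rabs (x / y) <= k.
Proof. intros H Hy. unfold Rdiv. rewrite Rabs_mult, Rabs_inv.
  assert (0 < Rabs y) by (apply Rabs_pos_lt; auto).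
  apply Rmult_le_reg_r with (Rabs y); auto. rewrite Rmult_assoc, Rinv_l by lra. lra. Qed.

Lemma dq_lower A B f f1 m a b : deriv_on A B f f1 -> (forall x, inI A B x -> m <= f1 x) ->
  inI A B a -> inI A B b -> m <= dquot f f1 a b.
Proof.
  intros Hd Hm Ha Hb.
  assert (K: forall a b, inI A B a -> inI A B b -> a <= b -> m <= dquot f f1 a b).
  { clear a b Ha Hb. intros a b Ha Hb Hab. unfold dquot. destruct (Req_EM_T a b). apply Hm; auto.
    unfold inI in *.
    destruct (mvt_on A B f f1 (fun _ => 0) (fun _ => 0) a b Hd ltac:(intro; apply derivable_pt_lim_const)
      ltac:(lra) Hab ltac:(lra)) as [c [Hc Heq]].
    replace ((f a - f b) / (a - b)) with (f1 c) by (field_simplify_eq; [lra| intro; apply n; lra]).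
    apply Hm. unfold inI; lra. }
  destruct (Rle_dec a b). apply K; auto. rewrite dquot_sym. apply K; auto. lra.
Qed.

Section Tay2.
Variables (A B lo hi Hw M3 : R) (f f1 f2 f3 : R -> R).
Hypothesis d0 : deriv_on A B f f1.
Hypothesis d1 : deriv_on A B f1 f2.
Hypothesis d2 : deriv_on A B f2 f3.
Hypothesis Alo : A <= lo.
Hypothesis hiB : hi <= B.
Hypothesis Hw0 : 0 <= Hw.
Hypothesis hol : forall t s, lo <= t <= hi -> lo <= s <= hi -> Rabs (f3 t - f3 s) <= Hw.
Hypothesis HM3 : forall t, lo <= t <= hi -> Rabs (f3 t) <= M3.

Let tc' := tc A B lo hi Hw f1 f2 f3 d1 d2 Alo hiB Hw0 hol.
Let td' := td A B lo hi Hw f f1 f2 f3 d0 d1 d2 Alo hiB Hw0 hol.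
Let tb' := tb A B lo hi Hw f2 f3 d2 Alo hiB Hw0 hol.

Lemma ea_ex p a : lo <= p <= hi -> lo <= a <= hi -> exists e,
  dquot f f1 p a = f1 p + f2 p * (a - p) / 2 + f3 p * (a - p)^2 / 6 + e /\ Rabs e <= Hw * (a - p)^2.
Proof.
  intros Hp Ha.
  exists (dquot f f1 p a - (f1 p + f2 p * (a - p) / 2 + f3 p * (a - p)^2 / 6)). split. ring.
  unfold dquot. destruct (Req_EM_T p a) as [<-|Hne].
  - rewrite Rminus_eq_0. replace (f1 p - (f1 p + f2 p * 0 / 2 + f3 p * 0 ^ 2 / 6)) with 0 by field. rewrite Rabs_R0. nra.
  - assert (Hap: a - p <> 0) by (intro; apply Hne; lra).
    assert (Hpa: p - a <> 0) by (intro; apply Hne; lra).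
    pose proof (td' p a Hp Ha) as H.
    match type of H with Rabs ?E <= _ => set (EE := E) in H end.
    replace (_ - _) with (EE / (a - p)) by (unfold EE; field; auto).
    apply div_bound; auto. rewrite <- (pow2_abs (a - p)).
    replace (Hw * Rabs (a - p) ^ 2 * Rabs (a - p)) with (Hw * Rabs (a - p) ^ 3) by ring. exact H.
Qed.

Lemma Qmid p a c : lo <= p <= hi -> lo <= a <= hi -> lo <= c <= hi -> a <> c ->
  Rmin a c <= p <= Rmax a c ->
  Rabs ((dquot f f1 p a - dquot f f1 p c)/(a - c) - (f2 p / 2 + f3 p * ((a - p) + (c - p)) / 6))
   <= Hw * (hi - lo).
Proof.
  intros Hp Ha Hc Hac Hbt.
  destruct (ea_ex p a Hp Ha) as [ea [Ea Ba]]. destruct (ea_ex p c Hp Hc) as [ec [Ec Bc]].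
  rewrite Ea, Ec.
  assert (Hac': a - c <> 0) by (intro; apply Hac; lra).
  replace (_ - _) with ((ea - ec)/(a-c)) by (field; auto).
  apply div_bound; auto.
  unfold Rminus at 1. eapply Rle_trans. apply Rabs_triang. rewrite Rabs_Ropp.
  assert (G: (a-p)^2 + (c-p)^2 <= (hi-lo)*Rabs(a-c)).
  { revert Hbt. unfold Rmin, Rmax, Rabs; repeat destruct Rle_dec; repeat destruct Rcase_abs; intros; nra. }
  nra.
Qed.

Lemma Fshift p x s : lo <= p <= hi -> lo <= x <= hi -> Rabs s <= 2 * (hi - lo) ->
  Rabs (f2 p / 2 + f3 p * s / 6 - (f2 x / 2 + f3 x * (s + 3 * (p - x)) / 6)) <= Hw * (hi - lo).
Proof.
  intros Hp Hx Hs.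
  replace (_ - _) with ((f2 p - f2 x - f3 x * (p - x)) / 2 + (f3 p - f3 x) * s / 6) by field.
  pose proof (tb' x p Hx Hp) as H1. pose proof (hol p x Hp Hx) as H2.
  assert (Hpx: Rabs (p - x) <= hi - lo) by (unfold Rabs; destruct Rcase_abs; lra).
  eapply Rle_trans. apply Rabs_triang.
  unfold Rdiv. rewrite !Rabs_mult. rewrite (Rabs_pos_eq (/2)) by lra. rewrite (Rabs_pos_eq (/6)) by lra.
  assert (Rabs (f2 p - f2 x - f3 x * (p - x)) <= Hw * (hi - lo)) by
    (eapply Rle_trans; [exact H1| apply Rmult_le_compat_l; auto]).
  assert (Rabs (f3 p - f3 x) * Rabs s <= Hw * (2 * (hi - lo))) by
    (apply Rmult_le_compat; auto; apply Rabs_pos).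
  assert (0 <= Hw*(hi-lo)) by (apply Rmult_le_pos; lra). lra.
Qed.

Lemma Qbound x1 x2 x3 : lo <= x1 <= hi -> lo <= x2 <= hi -> lo <= x3 <= hi -> x1 <> x3 ->
  Rabs ((dquot f f1 x1 x2 - dquot f f1 x2 x3)/(x1 - x3)
         - (f2 x1 / 2 + f3 x1 * (x2 + x3 - 2 * x1) / 6)) <= 2 * Hw * (hi - lo).
Proof.
  intros H1 H2 H3 H13.
  pose proof (dquot_mul f f1 x1 x2) as e12. pose proof (dquot_mul f f1 x2 x3) as e23.
  pose proof (dquot_mul f f1 x1 x3) as e13.
  assert (Hcase: (Rmin x1 x3 <= x2 <= Rmax x1 x3) \/ (Rmin x2 x3 <= x1 <= Rmax x2 x3)
     \/ (Rmin x1 x2 <= x3 <= Rmax x1 x2)) by (unfold Rmin, Rmax; repeat destruct Rle_dec; lra).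
  assert (Hd: forall a b, lo <= a <= hi -> lo <= b <= hi -> Rabs (a - b) <= hi - lo)
    by (intros; unfold Rabs; destruct Rcase_abs; lra).
  assert (H13': x1 - x3 <> 0) by (intro; apply H13; lra).
  destruct Hcase as [C|[C|C]].
  - rewrite (dquot_sym f f1 x1 x2).
    pose proof (Qmid x2 x1 x3 H2 H1 H3 H13 C) as Q.
    pose proof (Fshift x2 x1 ((x1 - x2) + (x3 - x2)) H2 H1) as F.
    replace (x1 - x2 + (x3 - x2) + 3 * (x2 - x1)) with (x2 + x3 - 2 * x1) in F by ring.
    assert (Rabs (x1 - x2 + (x3 - x2)) <= 2 * (hi - lo)) by
      (eapply Rle_trans; [apply Rabs_triang| pose proof (Hd x1 x2 H1 H2); pose proof (Hd x3 x2 H3 H2); lra]).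
    specialize (F H).
    match goal with |- Rabs (?X - ?Z) <= _ => replace (X - Z) with
      ((X - (f2 x2 / 2 + f3 x2 * (x1 - x2 + (x3 - x2)) / 6)) + (f2 x2 / 2 + f3 x2 * (x1 - x2 + (x3 - x2)) / 6 - Z)) by ring end.
    eapply Rle_trans. apply Rabs_triang. lra.
  - assert (H23: x2 <> x3).
    { intro E. rewrite E in C. revert C. unfold Rmin, Rmax. destruct Rle_dec; intros; apply H13; lra. }
    assert (H23': x2 - x3 <> 0) by (intro; apply H23; lra).
    assert (Eq: (dquot f f1 x1 x2 - dquot f f1 x2 x3) * (x2 - x3) = (dquot f f1 x1 x2 - dquot f f1 x1 x3) * (x1 - x3)).
    { apply Rminus_diag_uniq.
      replace (_ - _) with (- (dquot f f1 x1 x2 * (x1 - x2)) - dquot f f1 x2 x3 * (x2 - x3) + dquot f f1 x1 x3 * (x1 - x3)) by ring.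
      rewrite e12, e23, e13. ring. }
    replace ((dquot f f1 x1 x2 - dquot f f1 x2 x3) / (x1 - x3)) with
      ((dquot f f1 x1 x2 - dquot f f1 x1 x3) / (x2 - x3)).
    2:{ field_simplify_eq; auto. lra. }
    pose proof (Qmid x1 x2 x3 H1 H2 H3 H23 C) as Q.
    replace (x2 - x1 + (x3 - x1)) with (x2 + x3 - 2 * x1) in Q by ring.
    assert (0 <= Hw * (hi - lo)) by (apply Rmult_le_pos; lra).
    lra.
  - assert (H12: x1 <> x2).
    { intro E. rewrite E in C. revert C. unfold Rmin, Rmax. destruct Rle_dec; intros; apply H13; lra. }
    assert (H12': x1 - x2 <> 0) by (intro; apply H12; lra).
    assert (Eq: (dquot f f1 x1 x2 - dquot f f1 x2 x3) * (x1 - x2) = (dquot f f1 x3 x1 - dquot f f1 x3 x2) * (x1 - x3)).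
    { rewrite (dquot_sym f f1 x3 x1), (dquot_sym f f1 x3 x2). apply Rminus_diag_uniq.
      replace (_ - _) with (dquot f f1 x1 x2 * (x1 - x2) - dquot f f1 x2 x3 * (x1 - x2) - dquot f f1 x1 x3 * (x1 - x3) + dquot f f1 x2 x3 * (x1 - x3)) by ring.
      replace (dquot f f1 x2 x3 * (x1 - x2) ) with (dquot f f1 x2 x3 * (x1 - x3) - dquot f f1 x2 x3 * (x2 - x3)) by ring.
      rewrite e12, e23, e13. ring. }
    replace ((dquot f f1 x1 x2 - dquot f f1 x2 x3) / (x1 - x3)) with
      ((dquot f f1 x3 x1 - dquot f f1 x3 x2) / (x1 - x2)).
    2:{ field_simplify_eq; auto. lra. }
    pose proof (Qmid x3 x1 x2 H3 H1 H2 H12 C) as Q.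
    pose proof (Fshift x3 x1 ((x1 - x3) + (x2 - x3)) H3 H1) as F.
    replace (x1 - x3 + (x2 - x3) + 3 * (x3 - x1)) with (x2 + x3 - 2 * x1) in F by ring.
    assert (Rabs (x1 - x3 + (x2 - x3)) <= 2 * (hi - lo)) by
      (eapply Rle_trans; [apply Rabs_triang| pose proof (Hd x1 x3 H1 H3); pose proof (Hd x2 x3 H2 H3); lra]).
    specialize (F H).
    match goal with |- Rabs (?X - ?Z) <= _ => replace (X - Z) with
      ((X - (f2 x3 / 2 + f3 x3 * (x1 - x3 + (x2 - x3)) / 6)) + (f2 x3 / 2 + f3 x3 * (x1 - x3 + (x2 - x3)) / 6 - Z)) by ring end.
    eapply Rle_trans. apply Rabs_triang. lra.
Qed.

End Tay2.


Section Tay3.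
Variables (A B lo hi Hw M3 : R) (f f1 f2 f3 : R -> R).
Hypothesis d0 : deriv_on A B f f1.
Hypothesis d1 : deriv_on A B f1 f2.
Hypothesis d2 : deriv_on A B f2 f3.
Hypothesis Alo : A <= lo.
Hypothesis hiB : hi <= B.
Hypothesis Hw0 : 0 <= Hw.
Hypothesis hol : forall t s, lo <= t <= hi -> lo <= s <= hi -> Rabs (f3 t - f3 s) <= Hw.
Hypothesis HM3 : forall t, lo <= t <= hi -> Rabs (f3 t) <= M3.

Let tc' := tc A B lo hi Hw f1 f2 f3 d1 d2 Alo hiB Hw0 hol.

Lemma Dexp_le p a b : lo <= p <= hi -> lo <= a <= hi -> lo <= b <= hi -> a <= b ->
  Rabs (dquot f f1 a b - (f1 p + f2 p * ((a - p) + (b - p)) / 2)) <= (M3 + Hw) * (hi - lo)^2.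
Proof.
  intros Hp Ha Hb Hab.
  assert (Hd: forall a, lo <= a <= hi -> Rabs (a - p) <= hi - lo)
    by (intros; unfold Rabs; destruct Rcase_abs; lra).
  assert (Hsq: forall a, lo <= a <= hi -> (a - p)^2 <= (hi - lo)^2).
  { intros u Hu. rewrite <- (pow2_abs (u - p)). apply pow_incr. split. apply Rabs_pos. auto. }
  pose proof (HM3 p Hp) as M3p.
  assert (M30: 0 <= M3) by (eapply Rle_trans; [apply Rabs_pos| exact M3p]).
  unfold dquot. destruct (Req_EM_T a b) as [<-|Hne].
  - pose proof (tc' p a Hp Ha) as T.
    replace (f1 a - (f1 p + f2 p * (a - p + (a - p)) / 2)) with
      ((f1 a - (f1 p + f2 p * (a - p) + f3 p * (a - p) ^ 2 / 2)) + f3 p * (a - p)^2 / 2) by field.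
    eapply Rle_trans. apply Rabs_triang.
    rewrite (pow2_abs (a - p)) in T.
    unfold Rdiv. rewrite !Rabs_mult, (Rabs_pos_eq (/2)) by lra.
    rewrite (Rabs_pos_eq ((a - p)^2)) by apply pow2_ge_0.
    pose proof (Hsq a Ha).
    assert (Rabs (f3 p) * (a - p) ^ 2 <= M3 * (hi - lo)^2) by (apply Rmult_le_compat; auto; try apply Rabs_pos; try apply pow2_ge_0).
    assert (Hw * (a - p)^2 <= Hw * (hi-lo)^2) by (apply Rmult_le_compat_l; auto).
    unfold Rdiv in T. assert (0 <= M3 * (hi-lo)^2) by (apply Rmult_le_pos; [lra|apply pow2_ge_0]). lra.
  - assert (Hlt: a < b) by (destruct Hab; auto; congruence).
    destruct (mvt_on A B f f1
      (fun t => f p + f1 p * (t - p) + f2 p * (t - p) ^ 2 / 2 + f3 p * (t - p) ^ 3 / 6)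
      (fun t => f1 p + f2 p * (t - p) + f3 p * (t - p) ^ 2 / 2) a b d0 ltac:(dpl)
      ltac:(lra) Hab ltac:(lra)) as [c [Hc Heq]].
    cbv beta in Heq.
    set (E := f1 c - (f1 p + f2 p * (c - p) + f3 p * (c - p) ^ 2 / 2)) in Heq.
    assert (Hba: b - a <> 0) by lra. assert (Hab': a - b <> 0) by lra.
    assert (Hfab: f a - f b = - ((f p + f1 p * (b - p) + f2 p * (b - p) ^ 2 / 2 + f3 p * (b - p) ^ 3 / 6)
       - (f p + f1 p * (a - p) + f2 p * (a - p) ^ 2 / 2 + f3 p * (a - p) ^ 3 / 6) + E * (b - a))) by lra.
    rewrite Hfab.
    replace (_ - _) with (E + f3 p * ((a - p)^2 + (a - p) * (b - p) + (b - p)^2) / 6)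
      by (field; auto).
    eapply Rle_trans. apply Rabs_triang.
    assert (Hc': lo <= c <= hi) by lra.
    pose proof (tc' p c Hp Hc') as T. fold E in T. rewrite (pow2_abs (c - p)) in T.
    pose proof (Hsq c Hc').
    pose proof (Hd a Ha) as Da. pose proof (Hd b Hb) as Db.
    assert (X: 0 <= (a - p)^2 + (a - p) * (b - p) + (b - p)^2 <= 3 * (hi - lo)^2).
    { assert (-(hi-lo) <= a-p <= hi-lo) by (revert Da; unfold Rabs; destruct Rcase_abs; lra).
      assert (-(hi-lo) <= b-p <= hi-lo) by (revert Db; unfold Rabs; destruct Rcase_abs; lra).
      simpl. set (u := a - p) in *. set (v := b - p) in *. set (D := hi - lo) in *. split. nra. nra. }
    unfold Rdiv. rewrite !Rabs_mult, (Rabs_pos_eq (/6)) by lra. rewrite (Rabs_pos_eq (_ + _ + _)) by lra.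
    assert (Rabs (f3 p) * ((a - p)^2 + (a - p) * (b - p) + (b - p)^2) <= M3 * (3 * (hi - lo)^2))
      by (apply Rmult_le_compat; auto; try apply Rabs_pos; lra).
    assert (Hw * (c - p)^2 <= Hw * (hi-lo)^2) by (apply Rmult_le_compat_l; auto).
    nra.
Qed.

Lemma Dexp p a b : lo <= p <= hi -> lo <= a <= hi -> lo <= b <= hi ->
  Rabs (dquot f f1 a b - (f1 p + f2 p * ((a - p) + (b - p)) / 2)) <= (M3 + Hw) * (hi - lo)^2.
Proof.
  intros Hp Ha Hb. destruct (Rle_dec a b). apply Dexp_le; auto.
  rewrite dquot_sym. replace (a - p + (b - p)) with (b - p + (a - p)) by ring. apply Dexp_le; auto. lra.
Qed.

End Tay3.

Lemma mulb x y a b : Rabs x <= a -> Rabs y <= b -> Rabs (x * y) <= a * b.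
Proof. intros. rewrite Rabs_mult. apply Rmult_le_compat; auto; apply Rabs_pos. Qed.

Lemma invb z m : 0 < m -> m <= z -> Rabs (1 / z) <= 1 / m.
Proof. intros. rewrite Rabs_pos_eq. apply Rmult_le_compat_l. lra. apply Rinv_le_contravar; lra.
  apply Rmult_le_pos. lra. left; apply Rinv_0_lt_compat; lra. Qed.

Lemma final_alg f1v f2v f3v Dn Q s m M2 M3 L R1 P K cD D :
 0 < m -> m <= f1v -> m <= Dn -> Rabs f2v <= M2 -> Rabs f3v <= M3 -> Rabs s <= 2 * D ->
 0 <= D -> D <= L -> D * D <= R1 * P -> 0 <= cD ->
 Rabs (Q - (f2v / 2 + f3v * s / 6)) <= K * P ->
 Rabs (Dn - (f1v + f2v * s / 2)) <= cD * D ^ 2 ->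
 Rabs (Q / Dn - f2v / (2 * f1v) - 1 / 6 * (f3v / f1v - 3 / 2 * (f2v / f1v) ^ 2) * s) <=
   P * (K / m + (M2 / 2 + M3 * L / 3) * cD * R1 / (m * m)
        + M2 * M2 / 4 * (2 * (M2 + cD * L)) * R1 / (m * m * m) + M3 * M2 / 12 * 4 * R1 / (m * m)).
Proof.
  intros Hm H1 HD H2 H3 Hs D0 DL DD cD0 HQ HDn.
  assert (f1v <> 0) by lra. assert (Dn <> 0) by lra.
  set (T := f2v / 2 + f3v * s / 6) in *.
  assert (M20 : 0 <= M2) by (eapply Rle_trans; [apply Rabs_pos|eauto]).
  assert (M30 : 0 <= M3) by (eapply Rle_trans; [apply Rabs_pos|eauto]).
  replace (Q / Dn - f2v / (2 * f1v) - 1 / 6 * (f3v / f1v - 3 / 2 * (f2v / f1v) ^ 2) * s) with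
    ((Q - T) * (1 / Dn) + (- (T * (Dn - (f1v + f2v * s / 2)))) * (1 / f1v * (1 / Dn))
     + (f2v * f2v / 4) * (s * (Dn - f1v)) * ((1 / f1v) * (1 / f1v) * (1 / Dn))
     + (- (f3v * f2v / 12)) * (s * s) * (1 / f1v * (1 / Dn)))
    by (unfold T; field; auto).
  pose proof (invb Dn m Hm HD) as iD. pose proof (invb f1v m Hm H1) as i1.
  assert (Tb: Rabs T <= M2 / 2 + M3 * L / 3).
  { unfold T. eapply Rle_trans. apply Rabs_triang. unfold Rdiv.
    rewrite !Rabs_mult, (Rabs_pos_eq (/2)), (Rabs_pos_eq (/6)) by lra.
    assert (Rabs f3v * Rabs s <= M3 * (2 * L)) by (apply Rmult_le_compat; auto; try apply Rabs_pos; lra).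
    lra. }
  assert (eDb: Rabs (Dn - (f1v + f2v * s / 2)) <= cD * R1 * P).
  { eapply Rle_trans. exact HDn. rewrite Rmult_assoc. apply Rmult_le_compat_l; auto. simpl. lra. }
  assert (ub: Rabs (Dn - f1v) <= M2 * D + cD * D ^ 2).
  { replace (Dn - f1v) with ((Dn - (f1v + f2v * s / 2)) + f2v * s / 2) by ring.
    eapply Rle_trans. apply Rabs_triang. unfold Rdiv. rewrite !Rabs_mult, (Rabs_pos_eq (/2)) by lra.
    assert (Rabs f2v * Rabs s <= M2 * (2 * D)) by (apply Rmult_le_compat; auto; apply Rabs_pos). lra. }
  assert (sub: Rabs (s * (Dn - f1v)) <= 2 * (M2 + cD * L) * R1 * P).
  { eapply Rle_trans. apply (mulb _ _ _ _ Hs ub).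
    assert (0 <= D*D) by nra.
    assert (cD * (D * D) * D <= cD * (D * D) * L) by (apply Rmult_le_compat_l; nra).
    assert (2 * D * (M2 * D + cD * D ^ 2) <= 2 * (M2 + cD * L) * (D * D)) by (simpl; nra).
    assert (2 * (M2 + cD * L) * (D * D) <= 2 * (M2 + cD * L) * (R1 * P)) by
      (apply Rmult_le_compat_l; auto; nra).
    lra. }
  assert (ssb: Rabs (s * s) <= 4 * R1 * P).
  { eapply Rle_trans. apply (mulb _ _ _ _ Hs Hs). lra. }
  pose proof (mulb _ _ _ _ HQ iD) as b1.
  pose proof (mulb _ _ _ _ i1 iD) as i1D.
  pose proof (mulb _ _ _ _ i1 i1) as i11.
  pose proof (mulb _ _ _ _ i11 iD) as i11D.
  assert (b2: Rabs (- (T * (Dn - (f1v + f2v * s / 2))) * (1 / f1v * (1 / Dn)))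
     <= (M2 / 2 + M3 * L / 3) * (cD * R1 * P) * (1 / m * (1 / m))).
  { apply mulb; auto. rewrite Rabs_Ropp. apply mulb; auto. }
  assert (f22: Rabs (f2v * f2v / 4) <= M2 * M2 / 4).
  { unfold Rdiv. rewrite (Rabs_mult _ (/4)), (Rabs_pos_eq (/4)) by lra.
    apply Rmult_le_compat_r. lra. apply mulb; auto. }
  assert (b3: Rabs ((f2v * f2v / 4) * (s * (Dn - f1v)) * ((1 / f1v) * (1 / f1v) * (1 / Dn)))
     <= M2 * M2 / 4 * (2 * (M2 + cD * L) * R1 * P) * (1 / m * (1 / m) * (1 / m))).
  { apply mulb; auto. apply mulb; auto. }
  assert (f32: Rabs (- (f3v * f2v / 12)) <= M3 * M2 / 12).
  { rewrite Rabs_Ropp. unfold Rdiv. rewrite (Rabs_mult _ (/12)), (Rabs_pos_eq (/12)) by lra.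
    apply Rmult_le_compat_r. lra. apply mulb; auto. }
  assert (b4: Rabs ((- (f3v * f2v / 12)) * (s * s) * (1 / f1v * (1 / Dn)))
     <= M3 * M2 / 12 * (4 * R1 * P) * (1 / m * (1 / m))).
  { apply mulb; auto. apply mulb; auto. }
  eapply Rle_trans. apply Rabs_triang.
  eapply Rle_trans. apply Rplus_le_compat_r. apply Rabs_triang.
  eapply Rle_trans. apply Rplus_le_compat_r. apply Rplus_le_compat_r. apply Rabs_triang.
  assert (m <> 0) by lra.
  match goal with |- _ <= ?Y => replace Y with
    (K * P * (1 / m) + (M2 / 2 + M3 * L / 3) * (cD * R1 * P) * (1 / m * (1 / m))
     + M2 * M2 / 4 * (2 * (M2 + cD * L) * R1 * P) * (1 / m * (1 / m) * (1 / m))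
     + M3 * M2 / 12 * (4 * R1 * P) * (1 / m * (1 / m))) by (field; auto) end.
  lra.
Qed.

Lemma Rpower_nonneg x y : 0 <= Rpower x y.
Proof. unfold Rpower. left; apply exp_pos. Qed.

Theorem proposition1 (beta A B : R) (f f1 f2 f3 : R -> R) :
  0 <= beta <= 1 ->
  C3beta_on A B beta f f1 f2 f3 ->
  (forall x, A <= x <= B -> 0 < f1 x) ->
  exists C : R, forall x1 x2 x3 : R,
    A <= x1 <= B -> A <= x2 <= B -> A <= x3 <= B ->
    exists Rm : R,
      ratio_dist f f1 x1 x2 x3 =
        1 + (x1 - x3) * (f2 x1 / (2 * f1 x1)
              + 1 / 6 * schwarzian f1 f2 f3 x1 * (x2 + x3 - 2 * x1) + Rm) /\
      Rabs Rm <= C * powr (Rmax x1 (Rmax x2 x3) - Rmin x1 (Rmin x2 x3)) (1 + beta).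
Proof.
  intros Hb [d0 [d1 [d2 [c3 [K0 HK]]]]] Hpos.
  destruct (Rle_dec A B) as [AB|AB].
  2:{ exists 0. intros x1 x2 x3 H1. lra. }
  set (L := B - A).
  set (K := Rabs K0).
  assert (K0p : 0 <= K) by apply Rabs_pos.
  assert (HK': forall x y, inI A B x -> inI A B y ->
     Rabs (f3 x - f3 y) <= K * Rpower (Rabs (x - y)) beta).
  { intros x y Hx Hy. destruct (Req_dec x y) as [<-|Hne].
    - rewrite Rminus_eq_0, Rabs_R0. apply Rmult_le_pos; auto. apply Rpower_nonneg.
    - eapply Rle_trans. apply HK; auto. apply Rmult_le_compat_r. apply Rpower_nonneg. apply RRle_abs. }
  set (M3 := Rabs (f3 A) + K * Rpower L beta).
  assert (HM3: forall t, inI A B t -> Rabs (f3 t) <= M3).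
  { intros t Ht. replace (f3 t) with ((f3 t - f3 A) + f3 A) by ring. eapply Rle_trans. apply Rabs_triang.
    unfold M3. unfold inI in Ht.
    assert (Rabs (f3 t - f3 A) <= K * Rpower L beta); [|lra].
    destruct (Req_dec t A) as [->|Hne].
    - rewrite Rminus_eq_0, Rabs_R0. apply Rmult_le_pos; auto. apply Rpower_nonneg.
    - eapply Rle_trans. apply HK'; unfold inI; lra. apply Rmult_le_compat_l; auto.
      apply Rle_Rpower_l. lra. split. apply Rabs_pos_lt. lra. unfold L. rewrite Rabs_pos_eq; lra. }
  assert (M30: 0 <= M3) by (eapply Rle_trans; [apply Rabs_pos| apply (HM3 A); unfold inI; lra]).
  set (M2 := Rabs (f2 A) + M3 * L).
  assert (HM2: forall t, inI A B t -> Rabs (f2 t) <= M2).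
  { intros t Ht.
    pose proof (step A B f2 f3 (fun _ => f2 A) (fun _ => 0) A t M3 0 d2
      ltac:(intro; apply derivable_pt_lim_const) ltac:(unfold inI; lra) Ht ltac:(cbv beta; ring) M30) as S.
    assert (Rabs (f2 t - f2 A) <= M3 * Rabs (t - A) ^ 1).
    { apply S. intros u Hu. rewrite Rminus_0_r. simpl. rewrite Rmult_1_r. apply HM3.
      unfold inI in *. revert Hu. unfold Rmin, Rmax. destruct Rle_dec; intros; lra. }
    unfold inI in Ht. simpl in H. rewrite Rmult_1_r, (Rabs_pos_eq (t - A)) in H by lra.
    replace (f2 t) with ((f2 t - f2 A) + f2 A) by ring. eapply Rle_trans. apply Rabs_triang.
    unfold M2, L. assert (M3 * (t - A) <= M3 * (B - A)) by (apply Rmult_le_compat_l; lra). lra. }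
  destruct (continuity_ab_min (fun y => f1 (clamp A B y)) A B AB
    (fun c Hc => clamp_cont A B f1 f2 A B c d1 (Rle_refl A) (Rle_refl B) Hc)) as [mx [Hmx Hmxin]].
  set (m := f1 mx).
  assert (Hm: forall x, inI A B x -> m <= f1 x).
  { intros x Hx. specialize (Hmx x Hx). cbv beta in Hmx. rewrite !clamp_id in Hmx by (unfold inI in *; lra).
    exact Hmx. }
  assert (Hm0: 0 < m) by (apply Hpos; auto).
  set (WL := Rpower L beta). set (R1 := Rpower L (1 - beta)). set (cD := M3 + K * WL).
  set (C0 := (2 * K) / m + (M2 / 2 + M3 * L / 3) * cD * R1 / (m * m)
        + M2 * M2 / 4 * (2 * (M2 + cD * L)) * R1 / (m * m * m) + M3 * M2 / 12 * 4 * R1 / (m * m)).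
  exists (Rabs C0).
  intros x1 x2 x3 H1 H2 H3.
  destruct (Req_dec x1 x3) as [E|N13].
  - subst x3. exists 0. split.
    + unfold ratio_dist. rewrite (dquot_sym f f1 x2 x1).
      assert (0 < dquot f f1 x1 x2) by (apply Rlt_le_trans with m; auto; apply (dq_lower A B); auto).
      rewrite Rminus_eq_0, Rmult_0_l, Rplus_0_r. field. lra.
    + rewrite Rabs_R0. apply Rmult_le_pos. apply Rabs_pos. unfold powr.
      destruct Req_EM_T. destruct Req_EM_T; lra. apply Rpower_nonneg.
  - set (lo := Rmin x1 (Rmin x2 x3)). set (hi := Rmax x1 (Rmax x2 x3)).
    assert (Alo: A <= lo) by (unfold lo, Rmin; repeat destruct Rle_dec; lra).
    assert (hiB: hi <= B) by (unfold hi, Rmax; repeat destruct Rle_dec; lra).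
    assert (I1: lo <= x1 <= hi) by (unfold lo, hi, Rmin, Rmax; repeat destruct Rle_dec; lra).
    assert (I2: lo <= x2 <= hi) by (unfold lo, hi, Rmin, Rmax; repeat destruct Rle_dec; lra).
    assert (I3: lo <= x3 <= hi) by (unfold lo, hi, Rmin, Rmax; repeat destruct Rle_dec; lra).
    set (D := hi - lo).
    assert (D0: 0 < D) by (unfold D, lo, hi, Rmin, Rmax in *; repeat destruct Rle_dec; lra).
    assert (DL: D <= L) by (unfold D, L; lra).
    set (W := Rpower D beta).
    assert (WWL: W <= WL) by (apply Rle_Rpower_l; lra).
    assert (W0: 0 <= W) by apply Rpower_nonneg.
    assert (hol: forall t s, lo <= t <= hi -> lo <= s <= hi -> Rabs (f3 t - f3 s) <= K * W).
    { intros t s Ht Hs. destruct (Req_dec t s) as [<-|Hne].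
      - rewrite Rminus_eq_0, Rabs_R0. apply Rmult_le_pos; auto.
      - eapply Rle_trans. apply HK'; unfold inI; lra. apply Rmult_le_compat_l; auto.
        apply Rle_Rpower_l. lra. split. apply Rabs_pos_lt. lra.
        unfold D; unfold Rabs; destruct Rcase_abs; lra. }
    assert (Hw0: 0 <= K * W) by (apply Rmult_le_pos; auto).
    assert (HM3': forall t, lo <= t <= hi -> Rabs (f3 t) <= M3) by (intros; apply HM3; unfold inI; lra).
    pose proof (Qbound A B lo hi (K * W) f f1 f2 f3 d0 d1 d2 Alo hiB Hw0 hol x1 x2 x3 I1 I2 I3 N13) as QB.
    pose proof (Dexp A B lo hi (K * W) M3 f f1 f2 f3 d0 d1 d2 Alo hiB Hw0 hol HM3' x1 x2 x3 I1 I2 I3) as DB.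
    replace (x2 - x1 + (x3 - x1)) with (x2 + x3 - 2 * x1) in DB by ring.
    set (Q := (dquot f f1 x1 x2 - dquot f f1 x2 x3) / (x1 - x3)) in QB.
    set (Dn := dquot f f1 x2 x3) in *.
    assert (mDn: m <= Dn) by (apply (dq_lower A B); auto).
    assert (mf1: m <= f1 x1) by (apply Hm; auto).
    exists (Q / Dn - f2 x1 / (2 * f1 x1) - 1 / 6 * (f3 x1 / f1 x1 - 3 / 2 * (f2 x1 / f1 x1) ^ 2) * (x2 + x3 - 2 * x1)).
    split.
    + unfold ratio_dist, schwarzian. fold Dn. unfold Q. field. split; [lra|]. split; [lra|].
      intro; apply N13; lra.
    + assert (PW: powr D (1 + beta) = D * W).
      { unfold powr. destruct Req_EM_T. lra.
        rewrite Rpower_plus, Rpower_1 by lra. reflexivity. }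
      rewrite PW.
      assert (DD: D * D <= R1 * (D * W)).
      { assert (D = W * Rpower D (1 - beta)).
        { unfold W. rewrite <- Rpower_plus. replace (beta + (1 - beta)) with 1 by ring. rewrite Rpower_1; lra. }
        assert (Rpower D (1 - beta) <= R1) by (apply Rle_Rpower_l; lra).
        assert (D * W * Rpower D (1 - beta) <= D * W * R1) by (apply Rmult_le_compat_l; nra).
        nra. }
      assert (cD0: 0 <= cD) by (unfold cD, WL; pose proof (Rpower_nonneg L beta); nra).
      assert (HDn: Rabs (Dn - (f1 x1 + f2 x1 * (x2 + x3 - 2 * x1) / 2)) <= cD * D ^ 2).
      { eapply Rle_trans. exact DB. apply Rmult_le_compat_r. apply pow2_ge_0. unfold cD.
        assert (K * W <= K * WL) by (apply Rmult_le_compat_l; auto). lra. }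
      assert (HQ: Rabs (Q - (f2 x1 / 2 + f3 x1 * (x2 + x3 - 2 * x1) / 6)) <= (2 * K) * (D * W)).
      { eapply Rle_trans. exact QB. fold D. lra. }
      assert (Hs: Rabs (x2 + x3 - 2 * x1) <= 2 * D).
      { revert I1 I2 I3. unfold D. unfold Rabs. destruct Rcase_abs; intros; lra. }
      pose proof (final_alg (f1 x1) (f2 x1) (f3 x1) Dn Q (x2 + x3 - 2 * x1) m M2 M3 L R1 (D * W) (2 * K) cD D
        Hm0 mf1 mDn ltac:(apply HM2; auto) ltac:(apply HM3; auto) Hs ltac:(lra) DL DD cD0 HQ HDn) as FA.
      eapply Rle_trans. exact FA. fold C0.
      rewrite (Rmult_comm (Rabs C0)). apply Rmult_le_compat_l. nra. apply RRle_abs.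
Qed.
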